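(* In the 1-sided False Negative regime, let the moldgraph $G$ have $m$ edges and belong to a $\rho$-sparse, minor-closed family of graphs. Then the algorithm SolveSparseFN, run on $G$, performs $O(\rho m)$ queries in expectation and uncovers a realized spanning tree with probability $1$. SolveSparseFN$(G)$: if $G$ has a single vertex, return $\emptyset$. Otherwise let $u$ be a vertex of minimum degree, let $N(u)$ be the collection of super-edges incident to $u$, and let $e=\mathrm{DISCOVER}(N(u))$. Contract $e$ to obtain $G'$ and return $\mathrm{SolveSparseFN}(G')\cup\{e\}$. DISCOVER$(\mathcal{S})$, for a collection $\mathcal{S}=\{E_1,\dots,E_k\}$ of edge sets each equipped with a fixed cyclic order: repeat rounds; in each round, for $i=1,\dots,k$, query the next edge $e$ in the cyclic order of $E_i$, and if the answer is ``Yes'' return $e$.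
   Context: Problem (graph connectivity with noisy queries): a graph $G=(V,E)$, the moldgraph, with $n$ vertices and $m$ edges is given. An adversary selects an arbitrary connected spanning subgraph of $G$ to be realized. The algorithm may query an oracle on any edge $e$ (``Is $e$ realized?''), receiving ``Yes''/``No''; each query costs $1$; answers to distinct queries (including repeated queries of the same edge) are independent. Goal: output a spanning tree of $G$ all of whose edges are realized. In the 1-sided False Negative regime: for a non-realized edge the answer is always ``No''; for a realized edge the answer is ``No'' with a constant probability $p<1/2$ and ``Yes'' with probability $1-p$. Multigraph conventions: during the algorithm graphs may have parallel edges; the set of all parallel edges between two vertices $u,v$ is called a super-edge (a simple edge is a super-edge of size $1$). $N(v)$ is the set of super-edges incident to $v$, and $\deg(v)=|N(v)|$. Contracting an edge $e=\{u,v\}$ replaces $u,v$ by a new vertex adjacent to all former neighbours of $u$ or $v$; all edges parallel to $e$ are deleted (no self-loops), and super-edges that become parallel are merged into one super-edge (their union). Edges keep their identity as edges of the original moldgraph. A graph with $m$ edges and $n$ vertices is $\rho$-sparse if $m\le\rho n$. A graph $H$ is a minor of $G$ if it can be obtained by edge deletions, vertex deletions and edge contractions; a family is minor-closed if it contains all minors of its members. *)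

(* Defs.v *)
From HB Require Import structures.
From mathcomp Require Import all_boot all_order all_algebra.
From mathcomp Require Import all_classical all_reals all_analysis.
Set Implicit Arguments. Unset Strict Implicit. Unset Printing Implicit Defensive.
Import Order.TTheory GRing.Theory Num.Theory.
Local Open Scope ring_scope.

Definition graph_class (F : forall T : finType, rel T -> Prop) : Prop :=
  forall (T : finType) (e : rel T), F T e -> symmetric e /\ irreflexive e.

Definition iso_closed (F : forall T : finType, rel T -> Prop) : Prop :=
  forall (T T' : finType) (e : rel T) (e' : rel T') (f : T -> T'),
    bijective f -> (forall a b, e' (f a) (f b) = e a b) -> F T e -> F T' e'.

Definition del_edge (T : finType) (e : rel T) (x y : T) : rel T :=
  fun a b => e a b && ~~ (((a == x) && (b == y)) || ((a == y) && (b == x))).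

Definition del_vertex (T : finType) (e : rel T) (v : T) : rel {a : T | a != v} :=
  fun a b => e (val a) (val b).

(* contraction of the edge {x,y}: y is merged into x; no loops, no multi-edges *)
Definition contract_edge (T : finType) (e : rel T) (x y : T) : rel {a : T | a != y} :=
  fun a b => (val a != val b) &&
    [|| e (val a) (val b), (val a == x) && e y (val b) | (val b == x) && e (val a) y].

Definition minor_closed (F : forall T : finType, rel T -> Prop) : Prop :=
  forall (T : finType) (e : rel T), F T e ->
    [/\ forall x y, F T (del_edge e x y),
        forall v : T, F {a : T | a != v} (@del_vertex T e v)
      & forall x y : T, e x y -> F {a : T | a != y} (@contract_edge T e x y)].

Definition nedges (T : finType) (e : rel T) : nat :=
  (#|[set pq : T * T | e pq.1 pq.2]|)./2.

Definition sparse_family (R : realType) (rho : R) (F : forall T : finType, rel T -> Prop) : Prop :=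
  forall (T : finType) (e : rel T), F T e -> (nedges e)%:R <= rho * (#|T|)%:R.

(* The moldgraph: vertices V, edges E with endpoints src/dst.          *)
Section Mold.
Variables (V E : finType) (src dst : E -> V).

Definition joins (ed : E) (x y : V) : bool :=
  ((src ed == x) && (dst ed == y)) || ((src ed == y) && (dst ed == x)).

Definition simple_moldgraph : Prop :=
  (forall ed, src ed != dst ed) /\ (forall e1 e2, joins e1 (src e2) (dst e2) -> e1 = e2).

Definition madj : rel V := fun x y => [exists ed, joins ed x y].

Definition adjS (S : {set E}) : rel V := fun x y => [exists ed in S, joins ed x y].

Definition connected_spanning (S : {set E}) : bool :=
  [forall x, forall y, connect (adjS S) x y].

Definition spanning_tree (S : {set E}) : bool :=
  connected_spanning S && [forall ed in S, ~~ connected_spanning (S :\ ed)].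

(* State of SolveSparseFN: the set S of edges contracted so far.  The current
   graph G' is G with all edges of S contracted: its vertices are the classes
   of connectivity of (V,S); its super-edges are the groups of edges of G joining
   two distinct classes. *)
Definition cls (S : {set E}) (x : V) : {set V} := [set y | connect (adjS S) x y].

Definition crosses (S : {set E}) (x y : V) : bool :=
  madj x y && ~~ connect (adjS S) x y.

Definition nbr_classes (S : {set E}) (u : V) : {set {set V}} :=
  [set cls S y | y in [set y | [exists x in cls S u, crosses S x y]]].

(* degree of (the vertex of G' containing) u = number of incident super-edges *)
Definition deg (S : {set E}) (u : V) : nat := #|nbr_classes S u|.

Definition super_edge (S : {set E}) (u : V) (c : {set V}) : {set E} :=
  [set ed | [exists x in cls S u, exists y in c, joins ed x y]].

Definition super_edges (S : {set E}) (u : V) : {set {set E}} :=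
  [set super_edge S u c | c in nbr_classes S u].

Definition min_degree (S : {set E}) (u : V) : bool := [forall v, (deg S u <= deg S v)%N].

(* The (arbitrary) deterministic choices of SolveSparseFN on the current graph
   G' (determined by S): [plan S] = [:: E_1; ...; E_k], the super-edges of N(u)
   for a minimum-degree vertex u, in some order, each listed in its cyclic order. *)
Definition valid_plan (plan : {set E} -> seq (seq E)) : Prop :=
  forall S, ~~ connected_spanning S ->
    exists2 u, min_degree S u &
      [/\ all uniq (plan S),
          uniq [seq [set x in l] | l <- plan S]
        & forall c, (c \in [seq [set x in l] | l <- plan S]) = (c \in super_edges S u)].

(* The j-th query (j = 0,1,2,...) of DISCOVER(plan S): round j / k, list j mod k. *)
Definition query (plan : {set E} -> seq (seq E)) (S : {set E}) (j : nat) : option E :=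
  let L := plan S in
  let k := size L in
  let l := nth [::] L (j %% k) in
  onth l ((j %/ k) %% size l).

Variables (Rz : {set E}) (plan : {set E} -> seq (seq E)).

(* State = (S, j): S the contracted edges,
   j the number of queries already made in the current DISCOVER call.
   The oracle answer to the query of edge ed is [(ed \in Rz) && b], where b is
   a fresh independent coin with P(b = true) = 1 - p (1-sided false negatives). *)
Definition step (st : {set E} * nat) (b : bool) : {set E} * nat :=
  let: (Sc, j) := st in
  if connected_spanning Sc then st else
  match query plan Sc j with
  | Some ed => if (ed \in Rz) && b then (ed |: Sc, 0%N) else (Sc, j.+1)
  | None => (Sc, j.+1)
  end.

Fixpoint exec (w : nat -> bool) (t : nat) : {set E} * nat :=
  match t with
  | 0 => (finset.set0, 0%N)
  | t'.+1 => step (exec w t') (w t')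
  end.

End Mold.

(* Probability of an event depending only on the first t coins, where the
   coins are i.i.d. with P(true) = 1 - p. *)
Definition prefix_prob (R : realType) (p : R) (t : nat) (A : (nat -> bool) -> bool) : R :=
  \sum_(w : {ffun 'I_t -> bool})
     (\prod_(i < t) (if w i then 1 - p else p)) *
     (A (fun n => match (insub n : option 'I_t) with Some i => w i | None => false end))%:R.

(* Expected number of queries: E[Q] = sum_{t >= 0} P(Q > t), where Q is the
   number of queries before SolveSparseFN terminates (possibly +oo). *)
Definition expected_queries (R : realType) (p : R) (V E : finType) (src dst : E -> V)
    (Rz : {set E}) (plan : {set E} -> seq (seq E)) : \bar R :=
  (\sum_(0 <= t <oo)
     (prefix_prob p t (fun w => ~~ connected_spanning src dst (exec src dst Rz plan w t).1))%:E)%E.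

(* Main.v *)
Require Import Defs.
From HB Require Import structures.
From mathcomp Require Import all_boot all_order all_algebra.
From mathcomp Require Import all_classical all_reals all_analysis.
From mathcomp Require Import ring lra zify.
From mathcomp Require Import fintype finset.
Import Order.TTheory GRing.Theory Num.Theory numFieldNormedType.Exports.
Set Implicit Arguments. Unset Strict Implicit. Unset Printing Implicit Defensive.

Lemma connect_closure (T : finType) (e : rel T) (Rr : T -> T -> Prop) x :
  Rr x x -> (forall y z, Rr x y -> e y z -> Rr x z) ->
  forall y, connect e x y -> Rr x y.
Proof.
move=> R0 RS y /connectP [q Hq ->].
elim: q x R0 RS Hq => [|h q IH] x0 R0 RS //= /andP [H1 H2].
have : forall z, Rr x0 z -> path e z q -> Rr x0 (last z q).
  clear -RS; elim: q => [|h' q IH] z Hz //= /andP [H1' H2'].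
  by apply: IH => //; apply: RS H1'.
by apply => //; apply: RS H1.
Qed.

Lemma connect_cut (T : finType) (e : rel T) (A : pred T) x y :
  connect e x y -> A x -> ~~ A y -> exists a b, [/\ e a b, A a & ~~ A b].
Proof.
case/connectP => q Hq ->; elim: q x Hq => [|h q IH] x0 /= Hq Ax.
  by rewrite Ax.
case/andP: Hq => H1 H2 Hl.
case: (boolP (A h)) => Ah; first exact: (IH h H2 Ah Hl).
by exists x0, h.
Qed.

Lemma connect_none (T : finType) (e : rel T) x y :
  (forall a b, ~~ e a b) -> connect e x y = (x == y).
Proof.
move=> He; apply/idP/idP; last by move/eqP->; exact: connect0.
case/connectP => -[|h q] /=; first by move=> _ ->.
by rewrite (negbTE (He _ _)).
Qed.

Notation QT A := {c : {set _} | c \in A}.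

Section Graph.
Variables (V E : finType) (src dst : E -> V).
Local Notation adj S := (adjS src dst S).
Local Notation conn S := (connect (adjS src dst S)).
Implicit Types (S : {set E}) (x y : V) (ed : E).

Lemma joinsC ed x y : joins src dst ed x y = joins src dst ed y x.
Proof. by rewrite /joins orbC. Qed.

Lemma adjS_sym S : symmetric (adj S).
Proof. by move=> x y; rewrite /adjS; apply: eq_existsb => ed; rewrite joinsC. Qed.

Lemma conn_sym S x y : conn S x y = conn S y x.
Proof. exact: (sym_connect_sym (adjS_sym S)). Qed.

Lemma conn_mono (S S' : {set E}) x y : S \subset S' -> conn S x y -> conn S' x y.
Proof.
move=> sub; apply: connect_sub => a b /existsP [ed /andP [Hin Hj]].
by apply: connect1; apply/existsP; exists ed; rewrite (fintype.subsetP sub).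
Qed.

Lemma joins_src ed : joins src dst ed (src ed) (dst ed).
Proof. by rewrite /joins !eqxx. Qed.

Lemma adj_edge S ed : ed \in S -> adj S (src ed) (dst ed).
Proof. by move=> H; apply/existsP; exists ed; rewrite H joins_src. Qed.

Lemma conn_add S ed x y : conn (ed |: S) x y =
  [|| conn S x y, conn S x (src ed) && conn S (dst ed) y
    | conn S x (dst ed) && conn S (src ed) y].
Proof.
set a := src ed; set b := dst ed.
apply/idP/idP.
- move=> H.
  apply: (@connect_closure _ _ (fun x y => is_true [|| conn S x y, conn S x a && conn S b y
    | conn S x b && conn S a y]) x _ _ y H); first by rewrite connect0.
  move=> y0 z R /existsP [ed' /andP [Hin Hj]].
  move: Hin; rewrite in_setU1 => /orP [/eqP E'|Hin].
    subst ed'; case/orP: Hj => /andP [/eqP E1 /eqP E2]; rewrite -/a -/b in E1 E2; subst y0 z.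
      case/or3P: R => [->|/andP [-> _]|/andP [-> _]]; by rewrite ?connect0 ?andbT ?orbT.
    case/or3P: R => [->|/andP [-> _]|/andP [-> _]]; by rewrite ?connect0 ?andbT ?orbT.
  have Hyz : conn S y0 z by apply: connect1; apply/existsP; exists ed'; rewrite Hin.
  case/or3P: R => [Hxy|/andP [H1 H2]|/andP [H1 H2]].
  + by rewrite (connect_trans Hxy Hyz).
  + by rewrite H1 (connect_trans H2 Hyz) orbT.
  + by rewrite H1 (connect_trans H2 Hyz) !orbT.
- have sub : S \subset ed |: S by apply/fintype.subsetP => z Hz; rewrite in_setU1 Hz orbT.
  have Hab : conn (ed |: S) a b by apply: connect1; apply: adj_edge; rewrite setU11.
  case/or3P => [H|/andP [H1 H2]|/andP [H1 H2]].
  + exact: conn_mono H.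
  + apply: connect_trans (conn_mono sub H1) _; apply: connect_trans Hab _; exact: conn_mono H2.
  + apply: connect_trans (conn_mono sub H1) _.
    rewrite (sym_connect_sym (adjS_sym _)) in Hab.
    apply: connect_trans Hab _; exact: conn_mono H2.
Qed.

Lemma mem_cls S x y : (y \in cls src dst S x) = conn S x y.
Proof. by rewrite inE. Qed.

Lemma cls_eq S x y : (cls src dst S x == cls src dst S y) = conn S x y.
Proof.
apply/eqP/idP => [E1|H].
  by rewrite -mem_cls E1 mem_cls connect0.
apply/setP => z; rewrite !mem_cls; apply/idP/idP => H'.
  by apply: connect_trans H'; rewrite conn_sym.
exact: connect_trans H H'.
Qed.


Lemma connE S x z : conn S x z -> forall y, conn S x y = conn S z y.
Proof.
move=> H y; apply/idP/idP => H'.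
  by apply: connect_trans H'; rewrite conn_sym.
exact: connect_trans H H'.
Qed.

Definition clss S : {set {set V}} := [set cls src dst S x | x in V].

Lemma cls_in S x : cls src dst S x \in clss S.
Proof. by apply/imsetP; exists x. Qed.

Lemma clssP S C y : C \in clss S -> y \in C -> C = cls src dst S y.
Proof.
case/imsetP => x _ -> Hy; apply/eqP; rewrite cls_eq; by rewrite -mem_cls.
Qed.

Lemma existsU (T : finType) (A B : {set T}) (P : pred T) :
  [exists x in A :|: B, P x] = [exists x in A, P x] || [exists x in B, P x].
Proof.
apply/existsP/orP => [[x /andP [/setUP [H|H] Px]]|[/existsP [x /andP [H Px]]|/existsP [x /andP [H Px]]]].
- by left; apply/existsP; exists x; rewrite H.
- by right; apply/existsP; exists x; rewrite H.
- by exists x; rewrite finset.in_setU H.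
- by exists x; rewrite finset.in_setU H orbT.
Qed.

Lemma exists1 (T : finType) (a : T) (P : pred T) : [exists x in [set a], P x] = P a.
Proof.
apply/existsP/idP => [[x /andP [/set1P -> H]]|H] //.
by exists a; rewrite set11.
Qed.

Definition Ex (C D : {set V}) := [exists x in C, exists y in D, madj src dst x y].
Definition qeT (A : {set {set V}}) : rel (QT A) :=
  fun c c' => (val c != val c') && Ex (val c) (val c').

Lemma ExUl A B C : Ex (A :|: B) C = Ex A C || Ex B C.
Proof. by rewrite /Ex existsU. Qed.
Lemma ExUr A B C : Ex C (A :|: B) = Ex C A || Ex C B.
Proof.
rewrite /Ex; apply/existsP/orP => [[x /andP [Hx]]|[/existsP [x /andP [Hx H]]|/existsP [x /andP [Hx H]]]].
- rewrite existsU => /orP [H|H]; [left|right]; apply/existsP; exists x; by rewrite Hx.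
- by exists x; rewrite Hx existsU H.
- by exists x; rewrite Hx existsU H orbT.
Qed.

End Graph.

Section Minor.
Variables (V E : finType) (src dst : E -> V).
Local Notation adj S := (adjS src dst S).
Local Notation conn S := (connect (adjS src dst S)).
Local Notation cls := (cls src dst).
Local Notation clss := (clss src dst).
Local Notation qe A := (@qeT V E src dst A).
Local Notation Ex := (Ex src dst).
Implicit Types (S : {set E}) (x y : V) (ed : E).
Local Unset Implicit Arguments.
Variable F : forall T : finType, rel T -> Prop.
Local Set Implicit Arguments.
Hypotheses (Hsimple : simple_moldgraph src dst) (Hiso : iso_closed F)
  (Hminor : minor_closed F) (HG : F V (madj src dst)).

Lemma madj_neq x y : madj src dst x y -> x != y.
Proof.
case/existsP => ed Hj; apply/eqP => Exy; subst y.
case: Hsimple => H _; move: (H ed).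
by case/orP: Hj => /andP [/eqP -> /eqP ->]; rewrite eqxx.
Qed.

Lemma cls0 x : cls finset.set0 x = [set x].
Proof.
apply/setP => y; rewrite mem_cls in_set1 connect_none ?(eq_sym x) //.
by move=> a b; apply/existsP => -[ed]; rewrite in_set0.
Qed.

Lemma F_base : F (QT (clss finset.set0)) (qe (clss finset.set0)).
Proof.
pose f := fun x => (Sub (cls finset.set0 x) (cls_in src dst finset.set0 x) : QT (clss finset.set0)).
have bij : bijective f.
  apply: inj_card_bij.
    move=> x y /(congr1 val) /=; rewrite !cls0; exact: set1_inj.
  by rewrite card_sig; apply: leq_trans (leq_imset_card _ _) _.
apply: (Hiso bij _ HG) => a b.
rewrite /qeT /= !cls0 /Ex exists1 exists1.
case H: (madj src dst a b); last by rewrite andbF.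
by rewrite andbT (inj_eq set1_inj) (madj_neq H).
Qed.

Lemma cls_same S ed : conn S (src ed) (dst ed) -> forall x, cls (ed |: S) x = cls S x.
Proof.
move=> Hab x; apply/setP => y; rewrite !mem_cls conn_add.
case H: (conn S x y) => //=.
apply/negbTE; apply/negP => /orP [/andP [H1 H2]|/andP [H1 H2]]; move/negbT: H => /negP; apply.
  exact: connect_trans H1 (connect_trans Hab H2).
apply: connect_trans H1 (connect_trans _ H2); by rewrite conn_sym.
Qed.

Lemma F_step S ed : F (QT (clss S)) (qe (clss S)) -> F (QT (clss (ed |: S))) (qe (clss (ed |: S))).
Proof.
move=> HS.
set a := src ed; set b := dst ed.
case: (boolP (conn S a b)) => Hab.
  have -> : clss (ed |: S) = clss S.
    by apply: eq_imset => x; apply: cls_same.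
  exact: HS.
set S' := ed |: S.
set ca := cls S a; set cb := cls S b.
pose ca' : QT (clss S) := Sub ca (cls_in src dst S a).
pose cb' : QT (clss S) := Sub cb (cls_in src dst S b).
have nab : ca != cb by rewrite cls_eq.
have Hqe : qeT src dst ca' cb'.
  rewrite /qeT /= nab /=; apply/existsP; exists a; rewrite mem_cls connect0 /=.
  apply/existsP; exists b; rewrite mem_cls connect0 /=.
  by apply/existsP; exists ed; rewrite /joins !eqxx.
case: (Hminor HS) => _ _ Hc.
have HC := Hc ca' cb' Hqe.
have clsS' x : cls S' x = if conn S a x || conn S b x then ca :|: cb else cls S x.
  apply/setP => y; rewrite mem_cls conn_add.
  case: (boolP (conn S a x)) => Hax /=.
    have Hxa : conn S x a by rewrite conn_sym.
    rewrite !(connE Hxa) connect0 (negbTE Hab) /= orbF.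
    by rewrite finset.in_setU !mem_cls.
  case: (boolP (conn S b x)) => Hbx /=.
    have Hxb : conn S x b by rewrite conn_sym.
    rewrite !(connE Hxb) connect0 [conn S b a]conn_sym (negbTE Hab) /=.
    by rewrite finset.in_setU !mem_cls orbC.
  by rewrite [conn S x a]conn_sym [conn S x b]conn_sym (negbTE Hax) (negbTE Hbx) /= !orbF mem_cls.
pose g := fun C : {set V} => if C == ca then ca :|: cb else C.
have gin C : C \in clss S -> C != cb -> g C \in clss S'.
  move=> HC1 HC2; rewrite /g; case: ifP => HCa.
    have -> : ca :|: cb = cls S' a by rewrite clsS' connect0.
    exact: cls_in.
  case/imsetP: HC1 HC2 HCa => x _ -> HC2 HCa.
  have -> : cls S x = cls S' x; last exact: cls_in.
  rewrite clsS'; case: ifP => // /orP [H|H].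
    by move/negbT: HCa; rewrite eq_sym cls_eq H.
  by move/negP: HC2; rewrite eq_sym cls_eq H.
have ginj C D : C \in clss S -> D \in clss S -> C != cb -> D != cb -> (g C == g D) = (C == D).
  have key X : X \in clss S -> X != cb -> X != ca -> ca :|: cb != X.
    move=> HX HXb HXa; apply/eqP => EX.
    have Hb : b \in X by rewrite -EX finset.in_setU /cb mem_cls connect0 orbT.
    by move/negP: HXb; apply; rewrite (clssP HX Hb).
  move=> HC' HD HCb HDb; rewrite /g.
  case: (boolP (C == ca)) => HCa; case: (boolP (D == ca)) => HDa.
  - by rewrite eqxx (eqP HCa) (eqP HDa) eqxx.
  - rewrite (negbTE (key _ HD HDb HDa)); apply/esym/negbTE.
    by rewrite (eqP HCa) eq_sym.
  - rewrite eq_sym (negbTE (key _ HC' HCb HCa)); apply/esym/negbTE.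
    by rewrite (eqP HDa).
  - by [].
pose d0 : QT (clss S') := Sub (cls S' a) (cls_in src dst S' a).
pose f := fun c : {c : QT (clss S) | c != cb'} => insubd d0 (g (val (val c))).
have valf c : val (f c) = g (val (val c)).
  apply: insubdK; apply: gin; first exact: (valP (val c)).
  by move: (valP c); apply: contra => /eqP H; apply/eqP/val_inj.
have vneq (c : {c : QT (clss S) | c != cb'}) : val (val c) != cb.
  by move: (valP c); apply: contra => /eqP H; apply/eqP/val_inj.
have bij : bijective f.
  apply: inj_card_bij.
    move=> c1 c2 /(congr1 val); rewrite !valf => /eqP.
    rewrite ginj ?(valP (val c1)) ?(valP (val c2)) ?vneq // => /eqP H.
    by apply/val_inj/val_inj.
  rewrite !card_sig.
  have -> : #|[pred x | x != cb']| = #|predC1 cb'| by apply: eq_card.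
  rewrite cardC1 card_sig.
  have -> : #|[pred x in clss S']| = #|clss S'| by apply: eq_card.
  have sub : clss S' \subset g @: (clss S :\ cb).
    apply/fintype.subsetP => C /imsetP [x _ ->]; rewrite clsS'.
    case: ifP => H.
      by apply/imsetP; exists ca; rewrite ?in_setD1 ?nab ?cls_in // /g eqxx.
    apply/imsetP; exists (cls S x); last first.
      rewrite /g; case: ifP => // /eqP; move/negbT: H; rewrite negb_or => /andP [H1 _].
      by move/eqP; rewrite eq_sym cls_eq => H2; rewrite H2 in H1.
    rewrite in_setD1 cls_in andbT; move/negbT: H; rewrite negb_or => /andP [_ H2].
    by rewrite eq_sym cls_eq.
  apply: leq_trans (subset_leq_card sub) _.
  apply: leq_trans (leq_imset_card _ _) _.
  have -> : #|[pred x in clss S]| = #|clss S| by apply: eq_card.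
  by rewrite (cardsD1 cb (clss S)) cls_in.
apply: (Hiso bij _ HC) => c1 c2.
rewrite /qeT /contract_edge !valf.
have E1 : (val c1 == ca') = (val (val c1) == ca) by rewrite -val_eqE.
have E2 : (val c2 == ca') = (val (val c2) == ca) by rewrite -val_eqE.
have E3 : (val c1 != val c2) = (val (val c1) != val (val c2)) by rewrite -val_eqE.
rewrite E1 E2 E3 ginj ?(valP (val c1)) ?(valP (val c2)) ?vneq //.
rewrite /= /g.
move: (vneq c1) (vneq c2) => /=; move: (sval (sval c1)) (sval (sval c2)) => v1 v2 n1 n2.
case: (boolP (v1 == ca)) => H1; case: (boolP (v2 == ca)) => H2 /=.
- by rewrite (eqP H1) (eqP H2) eqxx.
- rewrite (eqP H1) ExUl; case: (ca != v2) => //=.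
  by rewrite eq_sym n2 /= orbF.
- rewrite (eqP H2) ExUr; case: (v1 != ca) => //=.
- by case: (v1 != v2) => //=; rewrite orbF.
Qed.

Lemma F_quot S : F (QT (clss S)) (qe (clss S)).
Proof.
rewrite -[S]set_enum; elim: (enum S) => [|ed s IH].
  by rewrite set_nil; exact: F_base.
by rewrite set_cons; apply: F_step.
Qed.

End Minor.

Section Deg.
Variables (V E : finType) (src dst : E -> V).
Local Notation adj S := (adjS src dst S).
Local Notation conn S := (connect (adjS src dst S)).
Local Notation cls := (cls src dst).
Local Notation clss := (clss src dst).
Local Notation qe A := (@qeT V E src dst A).
Local Notation Ex := (Ex src dst).
Implicit Types (S : {set E}) (x y : V) (ed : E).

Lemma nbr_card S x (c : QT (clss S)) : val c = cls S x ->
  #|[set c' | qe (clss S) c c']| = deg src dst S x.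
Proof.
move=> Hc; rewrite /deg -(card_imset _ val_inj); apply: eq_card => C.
rewrite /nbr_classes; apply/imsetP/imsetP.
- case=> c'; rewrite inE => /andP [Hn /existsP [x' /andP [Hx' /existsP [y /andP [Hy Hm]]]]] ->.
  exists y; last exact: clssP (valP c') Hy.
  rewrite inE; apply/existsP; exists x'; rewrite -Hc Hx' /crosses Hm /=.
  apply/negP => Hxy; move/negP: Hn; apply; apply/eqP.
  rewrite (clssP (valP c) Hx') (clssP (valP c') Hy); apply/eqP; by rewrite cls_eq.
- case=> y; rewrite inE => /existsP [x' /andP [Hx' /andP [Hm Hnc]]] ->.
  exists (Sub (cls S y) (cls_in src dst S y) : QT (clss S)) => //.
  rewrite inE /qeT /= Hc; apply/andP; split.
    rewrite cls_eq; apply/negP => Hxy; move/negP: Hnc; apply.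
    by rewrite mem_cls in Hx'; apply: connect_trans Hxy; rewrite conn_sym.
  apply/existsP; exists x'; rewrite Hx' /=; apply/existsP; exists y.
  by rewrite mem_cls connect0.
Qed.

Lemma card_pairs (T : finType) (e : rel T) :
  #|[set pq : T * T | e pq.1 pq.2]| = \sum_(c : T) #|[set c' | e c c']|.
Proof.
rewrite -sum1_card big_mkcond /=.
under [RHS]eq_bigr => c _ do rewrite -sum1_card big_mkcond /=.
rewrite pair_big /=; apply: eq_bigr => -[a b] _; by rewrite !inE.
Qed.

Lemma deg_count S u : min_degree src dst S u ->
  #|clss S| * deg src dst S u <=
  #|[set pq : QT (clss S) * QT (clss S) | qe (clss S) pq.1 pq.2]|.
Proof.
move=> Hmin; rewrite card_pairs.
have -> : #|clss S| = #|{: QT (clss S)}| by rewrite card_sig; apply: eq_card.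
apply: (@leq_trans (\sum_(c : QT (clss S)) deg src dst S u)).
  by rewrite sum_nat_const.
apply: leq_sum => c _; case/imsetP: (valP c) => x _ Hx.
by rewrite (nbr_card Hx); exact: (forallP Hmin x).
Qed.

Lemma clss_ge2 S : ~~ connected_spanning src dst S -> 1 < #|clss S|.
Proof.
rewrite /connected_spanning negb_forall => /existsP [x]; rewrite negb_forall => /existsP [y Hxy].
apply: (@leq_trans #|[set cls S x; cls S y]|).
  by rewrite cards2 cls_eq Hxy.
apply: subset_leq_card; apply/fintype.subsetP => C /set2P [->|->]; exact: cls_in.
Qed.

End Deg.

Lemma real_arith (R : realFieldType) (k d h rho : R) :
  (k*d <= 2*h+1 -> h <= rho*k -> 2 <= k -> 1 <= d -> d <= 4*rho)%R.
Proof. move=> *; nra. Qed.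

Section DR.
Local Open Scope ring_scope.
Lemma deg_real (R : realType) (rho : R) (V E : finType) (src dst : E -> V)
  (F : forall T : finType, rel T -> Prop) S u d :
  simple_moldgraph src dst -> iso_closed F -> minor_closed F -> sparse_family rho F ->
  F V (madj src dst) -> ~~ connected_spanning src dst S -> min_degree src dst S u ->
  (1 <= d)%N -> (d <= deg src dst S u)%N -> ((d%:R : R) <= 4 * rho)%R.
Proof.
move=> Hs Hi Hm Hsp HG Hc Hmin d1 dd.
have HQ := F_quot Hs Hi Hm HG S.
have H1 := Hsp _ _ HQ.
move: (deg_count Hmin) (clss_ge2 Hc); rewrite /nedges in H1.
set N := #|[set pq | _]| in H1 *.
have Ec : #|{: QT (clss src dst S)}| = #|clss src dst S|.
  by rewrite card_sig; apply: eq_card.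
rewrite Ec in H1.
move=> Hkd Hk.
have Hkd' : (#|clss src dst S| * d <= N)%N.
  apply: leq_trans Hkd; exact: leq_mul.
have HN : (N <= (N./2).*2 + 1)%N.
  by rewrite -{1}(odd_double_half N) addnC leq_add2l leq_b1.
apply: (@real_arith R (#|clss src dst S|)%:R d%:R (N./2)%:R rho) => //.
- rewrite -natrM; apply: (@le_trans _ _ (((N./2).*2 + 1)%:R)).
    rewrite ler_nat; exact: leq_trans Hkd' HN.
  by rewrite natrD -mul2n natrM.
- by rewrite -[2]/(2%:R) ler_nat.
- by rewrite -[1]/(1%:R) ler_nat.
Qed.
End DR.

Section Delta.
Variables (P t0 : nat).
Hypotheses (P0 : (0 < P)%N) (t0P : (t0 < P)%N).

Definition delta (j : nat) : nat := (t0 + (P - j %% P)) %% P.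

Lemma delta_lt j : (delta j < P)%N.
Proof. exact: ltn_pmod. Qed.

Lemma delta_char j : (j + delta j) %% P = t0.
Proof.
rewrite /delta modnDmr.
have Hj := ltn_pmod j P0.
have -> : (j + (t0 + (P - j %% P)) = (j %/ P).+1 * P + t0)%N.
  rewrite {1}(divn_eq j P) mulSn; lia.
by rewrite modnMDl modn_small.
Qed.

Lemma delta_uniq j k : (k < P)%N -> (j + k) %% P = t0 -> k = delta j.
Proof.
move=> kP Hk.
have : (j + k == j + delta j %[mod P]) by rewrite Hk delta_char.
by rewrite eqn_modDl !modn_small ?delta_lt // => /eqP.
Qed.

Lemma delta0 j : delta j = 0%N -> j %% P = t0.
Proof. by move=> H; rewrite -(delta_char j) H addn0. Qed.

Lemma deltaS j : (0 < delta j)%N -> delta j.+1 = (delta j).-1.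
Proof.
move=> H; apply/esym/delta_uniq.
  by apply: leq_ltn_trans (delta_lt j); rewrite leq_pred.
by rewrite -(delta_char j) addSn -addnS prednK.
Qed.

Lemma deltaS0 j : delta j = 0%N -> delta j.+1 = P.-1.
Proof.
move=> H; apply/esym/delta_uniq; first by rewrite prednK.
by rewrite addSn -addnS prednK // modnDr delta0.
Qed.
End Delta.

Section Arith.
Local Open Scope ring_scope.
Lemma arith2 (R : realFieldType) (p rho dl P s d : R) :
  0 <= p -> p < 1 -> 0 <= dl -> dl <= P -> P = d * s -> d <= 4 * rho -> 0 <= s ->
  dl + P / (1 - p) <= 8 * rho / (1 - p) * s.
Proof.
move=> p0 p1 d0 dP HP Hd s0.
have q0 : 0 < 1 - p by lra.
have qn : 1 - p != 0 by rewrite lt0r_neq0.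
have HX : P / (1 - p) * (1 - p) = P by rewrite divfK.
have HY : 8 * rho / (1 - p) * (1 - p) = 8 * rho by rewrite divfK.
move: HX HY; set X := P / (1 - p); set Y := 8 * rho / (1 - p) => HX HY.
rewrite -(ler_pM2r q0).
have : 0 <= (4 * rho - d) * s by apply: mulr_ge0; lra.
have : 0 <= dl * p by apply: mulr_ge0.
have -> : (dl + X) * (1 - p) = dl - dl * p + P by rewrite -HX; ring.
have -> : Y * s * (1 - p) = 8 * rho * s by rewrite -HY; ring.
nra.
Qed.

Lemma arith_succ (R : realFieldType) (p B M M' s d d' P X F : R) :
  0 <= p -> p < 1 -> 0 <= B -> 0 <= s -> X*(1-p) = P -> 1 <= P -> F <= 2*B*M' -> M' + s <= M ->
  ((1 <= d /\ d' = d - 1) \/ (d = 0 /\ d' = P - 1)) ->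
  1 + (1-p)*F + p*(2*B*M - B*s + d' + X) <= 2*B*M - B*s + d + X.
Proof.
move=> p0 p1 B0 s0 HX P1 HF HM Hd.
have h1 : (1-p)*F <= (1-p)*(2*B*M - 2*B*s) by apply: ler_wpM2l; [lra| nra].
have X0 : 0 <= X by nra.
have Bs : 0 <= B * s by apply: mulr_ge0.
case: Hd => [[d1 ->]|[-> ->]].
- have : 0 <= (1-p)*(B*s + d - 1 + X) by apply: mulr_ge0; lra.
  lra.
- have : 0 <= (1-p)*(B*s) by apply: mulr_ge0; lra.
  have : 0 <= (1-p)*(P-1) by apply: mulr_ge0; lra.
  have : X - p*X = P by rewrite -HX; ring.
  lra.
Qed.
Lemma arith_B (R : realFieldType) (p rho x : R) :
  0 <= p -> p < 1 -> 1 <= x -> x <= 4 * rho -> 0 <= 8 * rho / (1 - p).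
Proof.
move=> p0 p1 H1 H2; have H3 : 0 <= 8 * rho by lra.
have H4 : 0 <= 1 - p by lra.
exact: divr_ge0.
Qed.

Lemma arith_X (R : realFieldType) (P p : R) :
  0 <= p -> p < 1 -> 0 <= P -> 0 <= P / (1 - p).
Proof. move=> p0 p1 P0; have H4 : 0 <= 1 - p by lra. exact: divr_ge0. Qed.

Lemma arith_ge0 (R : realFieldType) (B M s dl X : R) :
  0 <= B -> s <= M -> 0 <= s -> 0 <= dl -> 0 <= X -> 0 <= 2*B*M - B*s + dl + X.
Proof.
move=> B0 sM s0 d0 X0.
have : 0 <= B * (M - s) by apply: mulr_ge0 => //; lra.
have : 0 <= B * M by apply: mulr_ge0 => //; lra.
lra.
Qed.

Lemma arith_le (R : realFieldType) (B M s dl X : R) :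
  dl + X <= B * s -> 2*B*M - B*s + dl + X <= 2*B*M.
Proof. lra. Qed.
Lemma arith_fail (R : realFieldType) (p x : R) : 1 + (1 - p) * (x - 1) + p * (x - 1) <= x.
Proof. have -> : 1 + (1 - p) * (x - 1) + p * (x - 1) = x by ring. by []. Qed.
End Arith.

Lemma bigminn_le (T : eqType) (r : seq T) (Pr : pred T) (F : T -> nat) d x :
  x \in r -> Pr x -> (\big[minn/d]_(y <- r | Pr y) F y <= F x)%N.
Proof.
elim: r => [|y r IH] //; rewrite inE big_cons => /orP [/eqP <-|Hx] Px.
  by rewrite Px geq_minl.
case: ifP => _; last exact: IH.
by apply: leq_trans (geq_minr _ _) (IH Hx Px).
Qed.

Lemma mem_drop1 (T : eqType) (y x : T) r : x \in r -> x \in y :: r.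
Proof. by rewrite inE => ->; rewrite orbT. Qed.

Lemma bigminn_ex (T : eqType) (r : seq T) (Pr : pred T) (F : T -> nat) d :
  (forall x, x \in r -> Pr x -> (F x <= d)%N) -> has Pr r ->
  exists2 x, x \in r & Pr x && (F x == \big[minn/d]_(y <- r | Pr y) F y).
Proof.
elim: r => [|y r IH] //= Hd /orP [Py|Hr]; rewrite big_cons.
- case: (boolP (has Pr r)) => Hr.
    have [x xr /andP [Px /eqP Fx]] := IH (fun x xr => Hd x (@mem_drop1 _ y x r xr)) Hr.
    rewrite Py; case: (leqP (F y) (F x)) => H.
      by exists y; rewrite ?mem_head // Py /= -Fx (minn_idPl H).
    by exists x; rewrite ?inE ?xr ?orbT // Px /= -Fx (minn_idPr (ltnW H)).
  exists y; rewrite ?mem_head // Py /=.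
  rewrite big_hasC //; apply/eqP/esym/minn_idPl; apply: Hd => //; exact: mem_head.
- have [x xr /andP [Px /eqP Fx]] := IH (fun x xr => Hd x (@mem_drop1 _ y x r xr)) Hr.
  case: ifP => Py.
    case: (leqP (F y) (F x)) => H.
      by exists y; rewrite ?mem_head // Py /= -Fx (minn_idPl H).
    by exists x; rewrite ?inE ?xr ?orbT // Px /= -Fx (minn_idPr (ltnW H)).
  by exists x; rewrite ?inE ?xr ?orbT // Px /= Fx.
Qed.

Section Alg.
Variables (V E : finType) (src dst : E -> V) (Rz : {set E}) (plan : {set E} -> seq (seq E)).
Local Notation adj S := (adjS src dst S).
Local Notation conn S := (connect (adjS src dst S)).
Local Notation cls := (cls src dst).
Local Notation done S := (connected_spanning src dst S).
Implicit Types (S : {set E}) (x y : V) (ed : E).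
Hypotheses (HRz : connected_spanning src dst Rz) (Hplan : valid_plan src dst plan).

Lemma joins_conn T ed a b : joins src dst ed a b -> conn T (src ed) (dst ed) = conn T a b.
Proof. by case/orP => /andP [/eqP -> /eqP ->] //; rewrite conn_sym. Qed.

Lemma super_cross S u c ed : c \in nbr_classes src dst S u ->
  ed \in super_edge src dst S u c -> ~~ conn S (src ed) (dst ed).
Proof.
case/imsetP => y0; rewrite inE => /existsP [x0 /andP [Hx0 Hcr]] ->.
move: Hcr; rewrite /crosses => /andP [_ Hc].
rewrite inE => /existsP [x /andP [Hx /existsP [y /andP [Hy Hj]]]].
rewrite (joins_conn _ Hj); apply: contra Hc => Hxy.
move: Hx Hx0 Hy; rewrite !mem_cls => Hx Hx0 Hy.
have Hx0' : conn S x0 u by rewrite conn_sym.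
have Hy' : conn S y y0 by rewrite conn_sym.
exact: connect_trans Hx0' (connect_trans Hx (connect_trans Hxy Hy')).
Qed.

Lemma super_merge S u c ed ed' : c \in nbr_classes src dst S u ->
  ed \in super_edge src dst S u c -> ed' \in super_edge src dst S u c ->
  conn (ed |: S) (src ed') (dst ed').
Proof.
case/imsetP => y0 _ ->.
rewrite !inE => /existsP [x /andP [Hx /existsP [y /andP [Hy Hj]]]].
move=> /existsP [x' /andP [Hx' /existsP [y' /andP [Hy' Hj']]]].
rewrite (joins_conn _ Hj'); move: Hx Hy Hx' Hy'; rewrite !mem_cls => Hx Hy Hx' Hy'.
have sub : S \subset ed |: S by apply/fintype.subsetP => z Hz; rewrite in_setU1 Hz orbT.
have Hxy : conn (ed |: S) x y.
  by rewrite -(joins_conn _ Hj); apply: connect1; apply: adj_edge; rewrite setU11.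
have H1 : conn S x' u by rewrite conn_sym.
have H2 : conn S y y0 by rewrite conn_sym.
apply: connect_trans (conn_mono sub H1) _; apply: connect_trans (conn_mono sub Hx) _.
apply: connect_trans Hxy _; apply: connect_trans (conn_mono sub H2) _.
exact: conn_mono Hy'.
Qed.

Lemma plan_facts S : ~~ done S ->
  exists2 u, min_degree src dst S u &
  [/\ all uniq (plan S), (size (plan S) <= deg src dst S u)%N
    & forall l, l \in plan S -> exists2 c, c \in nbr_classes src dst S u &
         [set x in l] = super_edge src dst S u c].
Proof.
move=> Hd; have [u Hu [Hun Hmu Hmem]] := Hplan Hd.
exists u => //; split => //.
  rewrite -(size_map (fun l => [set x in l])) -(card_uniqP Hmu).
  rewrite (eq_card Hmem) /super_edges; exact: leq_imset_card.
move=> l Hl.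
have : [set x in l] \in super_edges src dst S u by rewrite -Hmem; apply: map_f.
by case/imsetP => c Hc ->; exists c.
Qed.

Lemma plan_cross S l ed : ~~ done S -> l \in plan S -> ed \in l -> ~~ conn S (src ed) (dst ed).
Proof.
move=> Hd Hl Hed; have [u _ [_ _ H]] := plan_facts Hd.
have [c Hc Hlc] := H l Hl.
by apply: (super_cross Hc); rewrite -Hlc inE.
Qed.

Lemma plan_merge S l ed ed' : ~~ done S -> l \in plan S -> ed \in l -> ed' \in l ->
  conn (ed |: S) (src ed') (dst ed').
Proof.
move=> Hd Hl Hed Hed'; have [u _ [_ _ H]] := plan_facts Hd.
have [c Hc Hlc] := H l Hl.
by apply: (super_merge Hc); rewrite -Hlc inE.
Qed.

Lemma plan_realized S : ~~ done S -> exists2 l, l \in plan S & has (mem Rz) l.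
Proof.
move=> Hd; have [u _ [_ _ _]] := plan_facts Hd.
have [u' Hu [Hun Hmu Hmem]] := Hplan Hd.
have [v Hv] : exists v, ~~ conn S u' v.
  move: Hd; rewrite /connected_spanning negb_forall => /existsP [x]; rewrite negb_forall => /existsP [y Hxy].
  case: (boolP (conn S u' x)) => Hx; last by exists x.
  exists y; apply: contra Hxy => Hy; apply: connect_trans Hy; by rewrite conn_sym.
have Hc := (forallP (forallP HRz u') v).
have [a [b [Hab Ha Hb]]] := connect_cut (A := [pred z | conn S u' z]) Hc (connect0 _ _) Hv.
move: Ha Hb => /= Ha Hb.
case/existsP: Hab => ed /andP [HedR Hj].
have Hcr : ~~ conn S a b.
  by apply: contra Hb => Hab; rewrite (connect_trans Ha Hab).
have Hc1 : cls S b \in nbr_classes src dst S u'.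
  apply/imsetP; exists b => //; rewrite inE; apply/existsP; exists a.
  rewrite mem_cls Ha /crosses Hcr andbT; by apply/existsP; exists ed.
have Hse : super_edge src dst S u' (cls S b) \in super_edges src dst S u' by apply: imset_f.
rewrite -Hmem in Hse; case/mapP: Hse => l Hl Hle.
exists l => //; apply/hasP; exists ed => //.
have : ed \in super_edge src dst S u' (cls S b).
  rewrite inE; apply/existsP; exists a; rewrite mem_cls Ha /=; apply/existsP; exists b.
  by rewrite mem_cls connect0.
by rewrite Hle inE.
Qed.

Definition crossing S := [set ed | ~~ conn S (src ed) (dst ed)].

Lemma size_set_uniq (l : seq E) : uniq l -> #|[set x in l]| = size l.
Proof. by move=> Hu; rewrite -(card_uniqP Hu); apply: eq_card => x; rewrite inE. Qed.

Lemma plan_uniq S l : ~~ done S -> l \in plan S -> uniq l.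
Proof. by move=> Hd Hl; have [u _ [H _ _]] := plan_facts Hd; move/allP: H; apply. Qed.

Lemma cross_drop S l ed : ~~ done S -> l \in plan S -> ed \in l ->
  (#|crossing (ed |: S)| + size l <= #|crossing S|)%N.
Proof.
move=> Hd Hl Hed.
have sub1 : [set x in l] \subset crossing S.
  by apply/fintype.subsetP => e'; rewrite !inE => He'; apply: plan_cross Hl He'.
have sub2 : crossing (ed |: S) \subset crossing S :\: [set x in l].
  apply/fintype.subsetP => e'; rewrite !inE => He'; apply/andP; split.
    by apply: contra He' => He'l; apply: plan_merge Hl Hed He'l.
  apply: contra He'; apply: conn_mono; apply/fintype.subsetP => z Hz.
  by rewrite in_setU1 Hz orbT.
rewrite -(size_set_uniq (plan_uniq Hd Hl)).
apply: leq_trans (_ : #|crossing S :\: [set x in l]| + #|[set x in l]| <= _)%N.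
  by rewrite leq_add2r; apply: subset_leq_card.
by rewrite cardsD (setIidPr sub1) subnK // subset_leq_card.
Qed.

Definition smin S := \big[minn/#|E|]_(l <- plan S | has (mem Rz) l) size l.
Definition ipick S := find (fun l => has (mem Rz) l && (size l == smin S)) (plan S).
Definition lpick S := nth [::] (plan S) (ipick S).
Definition pos S := find (mem Rz) (lpick S).
Definition dd S := size (plan S).
Definition PP S := (dd S * smin S)%N.
Definition tz S := (pos S * dd S + ipick S)%N.
Definition dlt S j := delta (PP S) (tz S) j.

Lemma has_pick S : ~~ done S -> has (fun l => has (mem Rz) l && (size l == smin S)) (plan S).
Proof.
move=> Hd; have [l Hl Hr] := plan_realized Hd.
have [x Hx /andP [H1 H2]] := @bigminn_ex _ (plan S) (fun l => has (mem Rz) l) size #|E|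
  (fun l Hl _ => (leq_trans (eq_leq (esym (size_set_uniq (plan_uniq Hd Hl)))) (max_card _)))
  (introT hasP (ex_intro2 _ _ l Hl Hr)).
by apply/hasP; exists x => //; rewrite H1.
Qed.

Lemma pick_facts S : ~~ done S ->
  [/\ (ipick S < dd S)%N, lpick S \in plan S, has (mem Rz) (lpick S) & size (lpick S) = smin S].
Proof.
move=> Hd; have H := has_pick Hd.
have Hi : (ipick S < dd S)%N by rewrite /ipick /dd -has_find.
have := nth_find [::] H; rewrite -/(ipick S) -/(lpick S) => /andP [H1 /eqP H2].
split => //; exact: mem_nth.
Qed.

Lemma smin_le S l : l \in plan S -> has (mem Rz) l -> (smin S <= size l)%N.
Proof. exact: bigminn_le. Qed.

Lemma pos_facts S : ~~ done S ->
  (pos S < smin S)%N /\ exists2 r, onth (lpick S) (pos S) = Some r & r \in Rz.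
Proof.
move=> Hd; have [_ _ Hh Hs] := pick_facts Hd.
rewrite /pos; move: (lpick S) Hh Hs => l Hh Hs.
have Hp : (find (mem Rz) l < size l)%N by rewrite -has_find.
split; first by rewrite -Hs.
case: l Hh Hs Hp => [|e0 l'] // Hh Hs Hp.
exists (nth e0 (e0 :: l') (find (mem Rz) (e0 :: l'))).
  by rewrite onthE (nth_map e0).
exact: (nth_find e0 Hh).
Qed.

Lemma dd_pos S : ~~ done S -> (0 < dd S)%N.
Proof. by move=> Hd; have [H _ _ _] := pick_facts Hd; apply: leq_ltn_trans H. Qed.

Lemma smin_pos S : ~~ done S -> (0 < smin S)%N.
Proof. by move=> Hd; have [H _] := pos_facts Hd; apply: leq_ltn_trans H. Qed.

Lemma PP_pos S : ~~ done S -> (0 < PP S)%N.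
Proof. by move=> Hd; rewrite muln_gt0 dd_pos ?smin_pos. Qed.

Lemma tz_lt S : ~~ done S -> (tz S < PP S)%N.
Proof.
move=> Hd; have [H1 _ _ _] := pick_facts Hd; have [H2 _] := pos_facts Hd.
rewrite /tz /PP; nia.
Qed.

Lemma query_target S j : ~~ done S -> j %% PP S = tz S ->
  query plan S j = onth (lpick S) (pos S).
Proof.
move=> Hd H; have [Hi _ _ Hs] := pick_facts Hd; have [Hp _] := pos_facts Hd.
have d0 := dd_pos Hd.
have Ej : j = ((j %/ PP S) * smin S + pos S) * dd S + ipick S.
  rewrite {1}(divn_eq j (PP S)) H /PP /tz; nia.
have Hm : j %% dd S = ipick S by rewrite {1}Ej modnMDl modn_small.
have Hq : j %/ dd S = (j %/ PP S) * smin S + pos S.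
  by rewrite [X in X %/ dd S]Ej divnMDl // (divn_small Hi) addn0.
rewrite /query -/(dd S) Hm Hq -/(lpick S) Hs modnMDl modn_small //.
Qed.

Lemma query_mem S j ed : ~~ done S -> query plan S j = Some ed ->
  exists2 l, l \in plan S & ed \in l.
Proof.
move=> Hd; rewrite /query => H.
exists (nth [::] (plan S) (j %% size (plan S))).
  by apply: mem_nth; apply: ltn_pmod; apply: dd_pos.
by apply/onthP; eexists; exact: H.
Qed.

Lemma dlt_hit S j : ~~ done S -> dlt S j = 0%N ->
  exists2 r, query plan S j = Some r & r \in Rz.
Proof.
move=> Hd H0; have [_ [r Hr HrR]] := pos_facts Hd.
exists r => //; rewrite query_target //.
exact: (delta0 (PP_pos Hd) (tz_lt Hd) H0).
Qed.

Lemma smin_cross S : ~~ done S -> (smin S <= #|crossing S|)%N.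
Proof.
move=> Hd; have [_ Hl _ Hs] := pick_facts Hd.
rewrite -Hs -(size_set_uniq (plan_uniq Hd Hl)); apply: subset_leq_card.
by apply/fintype.subsetP => e'; rewrite !inE => He'; apply: plan_cross Hl He'.
Qed.

Definition forest S := [forall e in S, ~~ conn (S :\ e) (src e) (dst e)].

Lemma forest_add S ed : forest S -> ~~ conn S (src ed) (dst ed) -> forest (ed |: S).
Proof.
move=> HF Hn; apply/forallP => e'; apply/implyP => He'.
have subD : forall (T : {set E}) (e : E), T :\ e \subset T by move=> T e; apply/fintype.subsetP => z; rewrite in_setD1 => /andP [].
case: (eqVneq e' ed) => [->|Hne].
  apply: contra Hn => H; apply: conn_mono H.
  by apply/fintype.subsetP => z; rewrite !inE => /andP [H1 /orP [/eqP H2|//]]; rewrite H2 eqxx in H1.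
have He'S : e' \in S by move: He'; rewrite in_setU1 (negbTE Hne).
have Eq : (ed |: S) :\ e' = ed |: (S :\ e').
  apply/setP => z; rewrite !inE; case: (eqVneq z ed) => [->|Hz].
    by rewrite /= ?orbT ?andbT eq_sym Hne.
  by [].

rewrite Eq conn_add.
have H0 := forallP HF e'; rewrite He'S /= in H0.
rewrite (negbTE H0) /=; apply/negP => /orP [/andP [H1 H2]|/andP [H1 H2]].
- move/negP: Hn; apply.
  have H1' := conn_mono (subD S e') H1; have H2' := conn_mono (subD S e') H2.
  have Hee : conn S (src e') (dst e') by apply: connect1; apply: adj_edge.
  rewrite conn_sym in H1'; rewrite conn_sym in H2'.
  exact: connect_trans H1' (connect_trans Hee H2').
- move/negP: Hn; apply.
  have H1' := conn_mono (subD S e') H1; have H2' := conn_mono (subD S e') H2.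
  have Hee : conn S (dst e') (src e') by rewrite conn_sym; apply: connect1; apply: adj_edge.
  exact: connect_trans H2' (connect_trans Hee H1').
Qed.

Lemma forest_tree S : forest S -> done S -> spanning_tree src dst S.
Proof.
move=> HF Hd; rewrite /spanning_tree Hd /=; apply/forallP => e; apply/implyP => He.
have := forallP HF e; rewrite He /= => H.
rewrite /connected_spanning negb_forall; apply/existsP; exists (src e).
by rewrite negb_forall; apply/existsP; exists (dst e).
Qed.

Lemma step_inv st b : forest st.1 -> st.1 \subset Rz ->
  forest (step src dst Rz plan st b).1 /\ (step src dst Rz plan st b).1 \subset Rz.
Proof.
case: st => S j /= HF HR; rewrite /step.
case: ifP => // /negbT Hd.
case Hq: (query plan S j) => [ed|] //.
case: ifP => // /andP [HedR _] /=; split.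
  apply: forest_add HF _; have [l Hl Hel] := query_mem Hd Hq; exact: plan_cross Hl Hel.
by apply/fintype.subsetP => z; rewrite in_setU1 => /orP [/eqP ->|Hz] //; apply: (fintype.subsetP HR).
Qed.

Section Real.
Local Open Scope ring_scope.
Variables (R : realType) (p rho : R).
Local Unset Implicit Arguments.
Variable F : forall T : finType, rel T -> Prop.
Local Set Implicit Arguments.
Hypotheses (p0 : 0 <= p) (p1 : p < 1).
Hypotheses (Hs : simple_moldgraph src dst) (Hi : iso_closed F) (Hm : minor_closed F)
  (Hsp : sparse_family rho F) (HG : F V (madj src dst)).

Definition BB := 8 * rho / (1 - p).

Definition Phi (st : {set E} * nat) : R :=
  if done st.1 then 0 else
  2 * BB * (#|crossing st.1|)%:R - BB * (smin st.1)%:R + (dlt st.1 st.2)%:R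
  + (PP st.1)%:R / (1 - p).

Lemma dd_le4 S : ~~ done S -> (dd S)%:R <= 4 * rho.
Proof.
move=> Hd; have [u Hu [_ Hdeg _]] := plan_facts Hd.
exact: (deg_real Hs Hi Hm Hsp HG Hd Hu (dd_pos Hd) Hdeg).
Qed.

Lemma BB_ge0 S : ~~ done S -> 0 <= BB.
Proof.
move=> Hd; have H := dd_le4 Hd; have H1 : 1 <= ((dd S)%:R : R) by rewrite ler1n dd_pos.
exact: (arith_B p0 p1 H1 H).
Qed.

Lemma crossing_done S : done S -> #|crossing S| = 0%N.
Proof.
move=> Hd; apply/eqP; rewrite cards_eq0; apply/eqP/setP => e'; rewrite !inE.
by rewrite (forallP (forallP Hd _) _).
Qed.

Lemma Phi_ge0 st : 0 <= Phi st.
Proof.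
rewrite /Phi; case: ifP => // /negbT Hd.
have B0 := BB_ge0 Hd.
have Hsm : ((smin st.1)%:R : R) <= (#|crossing st.1|)%:R by rewrite ler_nat smin_cross.
apply: arith_ge0; [exact: B0|exact: Hsm|exact: ler0n|exact: ler0n|].
by apply: arith_X => //; exact: ler0n.
Qed.

Lemma Phi_le st : Phi st <= 2 * BB * (#|crossing st.1|)%:R.
Proof.
rewrite /Phi; case: ifP => [Hd|/negbT Hd]; first by rewrite crossing_done // mulr0.
have : (dlt st.1 st.2)%:R + (PP st.1)%:R / (1 - p) <= BB * (smin st.1)%:R.
  apply: (@arith2 R p rho _ _ _ (dd st.1)%:R) => //.
  - by rewrite ler_nat ltnW // delta_lt // PP_pos.
  - by rewrite /PP natrM.
  - exact: dd_le4.
exact: arith_le.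
Qed.

Lemma PhiS S j : ~~ done S -> (0 < dlt S j)%N -> Phi (S, j.+1) = Phi (S, j) - 1.
Proof.
move=> Hd H; rewrite /Phi /= (negbTE Hd) /dlt (deltaS (PP_pos Hd) (tz_lt Hd) H).
rewrite -subn1 natrB // -/(dlt S j); ring.
Qed.

Lemma Phi_step st : ~~ done st.1 ->
  1 + (1 - p) * Phi (step src dst Rz plan st true) + p * Phi (step src dst Rz plan st false) <= Phi st.
Proof.
case: st => S j /= Hd; rewrite /step (negbTE Hd).
have Hfail : (0 < dlt S j)%N -> 1 + (1 - p) * Phi (S, j.+1) + p * Phi (S, j.+1) <= Phi (S, j).
  by move=> H; rewrite PhiS //; apply: arith_fail.
case Hq: (query plan S j) => [ed|]; last first.
  apply: Hfail; rewrite lt0n; apply/negP => /eqP H0.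
  by have [r Hr _] := dlt_hit Hd H0; rewrite Hq in Hr.
case HR: (ed \in Rz) => /=; last first.
  apply: Hfail; rewrite lt0n; apply/negP => /eqP H0.
  have [r Hr HrR] := dlt_hit Hd H0; rewrite Hq in Hr; case: Hr => Er; subst r.
  by rewrite HrR in HR.
have [l Hl Hel] := query_mem Hd Hq.
have Hdrop := cross_drop Hd Hl Hel.
have Hsl : (smin S <= size l)%N by apply: smin_le => //; apply/hasP; exists ed.
have Hdrop' : (#|crossing (ed |: S)| + smin S <= #|crossing S|)%N.
  by apply: leq_trans Hdrop; rewrite leq_add2l.
have q0 : 1 - p != 0 by rewrite subr_eq0 eq_sym lt_eqF.
have P1 : (1 <= PP S)%N by apply: PP_pos.
rewrite /Phi /= (negbTE Hd).
have B0 := BB_ge0 Hd.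
have s0 : 0 <= ((smin S)%:R : R) by exact: ler0n.
have HX : (PP S)%:R / (1 - p) * (1 - p) = ((PP S)%:R : R) by rewrite divfK.
have HP1 : 1 <= ((PP S)%:R : R) by rewrite ler1n.
have HF := Phi_le (ed |: S, 0%N).
have HM : ((#|crossing (ed |: S)|)%:R : R) + (smin S)%:R <= (#|crossing S|)%:R.
  by rewrite -natrD ler_nat.
have Hdl : (1 <= ((dlt S j)%:R : R) /\ ((dlt S j.+1)%:R : R) = (dlt S j)%:R - 1) \/
           (((dlt S j)%:R : R) = 0 /\ ((dlt S j.+1)%:R : R) = (PP S)%:R - 1).
  case: (posnP (dlt S j)) => H0; [right|left].
    by rewrite /dlt (deltaS0 (PP_pos Hd) (tz_lt Hd) H0) -/(dlt S j) H0 -subn1 natrB.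
  by rewrite /dlt (deltaS (PP_pos Hd) (tz_lt Hd) H0) -/(dlt S j) -subn1 natrB // ler1n.
exact: (arith_succ p0 p1 B0 s0 HX HP1 HF HM Hdl).
Qed.

End Real.

End Alg.

Local Open Scope ring_scope.

Definition bcons (b : bool) (w : nat -> bool) : nat -> bool :=
  fun n => if n is n'.+1 then w n' else b.

Definition extw (t : nat) (w : {ffun 'I_t -> bool}) : nat -> bool :=
  fun n => match (insub n : option 'I_t) with Some i => w i | None => false end.

Section Pr.
Variables (R : realType) (p : R).

Fixpoint pr (t : nat) (g : (nat -> bool) -> R) : R :=
  match t with
  | 0 => g (fun _ => false)
  | t'.+1 => (1 - p) * pr t' (fun w => g (bcons true w)) + p * pr t' (fun w => g (bcons false w))
  end.

Lemma pr_ext t g g' : (forall w, g w = g' w) -> pr t g = pr t g'.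
Proof.
elim: t g g' => [|t IH] g g' H /=; first exact: H.
by congr (_ * _ + _ * _); apply: IH => w; apply: H.
Qed.

Lemma pr_const t c : pr t (fun _ => c) = c.
Proof. by elim: t => [|t IH] //=; rewrite !IH; ring. Qed.

Lemma pr_add t g h : pr t (fun w => g w + h w) = pr t g + pr t h.
Proof. by elim: t g h => [|t IH] g h //=; rewrite !IH; ring. Qed.

Lemma pr_scale t c g : pr t (fun w => c * g w) = c * pr t g.
Proof. by elim: t g => [|t IH] g //=; rewrite !IH; ring. Qed.

Lemma pr_compl t (A : (nat -> bool) -> bool) :
  pr t (fun w => (A w)%:R) = 1 - pr t (fun w => (~~ A w)%:R).
Proof.
have E w : ((A w)%:R : R) = 1 + (-1) * (~~ A w)%:R.
  by case: (A w); rewrite /= ?mulr0n ?mulr1n; ring.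
rewrite (pr_ext _ E) pr_add pr_const pr_scale; ring.
Qed.

Lemma pr_le t g h : 0 <= p -> p <= 1 -> (forall w, g w <= h w) -> pr t g <= pr t h.
Proof.
move=> p0 p1; elim: t g h => [|t IH] g h H //=.
apply: lerD; apply: ler_wpM2l; rewrite ?subr_ge0 //; exact: IH.
Qed.

Lemma pr_ge0 t g : 0 <= p -> p <= 1 -> (forall w, 0 <= g w) -> 0 <= pr t g.
Proof. by move=> p0 p1 H; rewrite -(pr_const t 0); apply: pr_le. Qed.

Lemma extw0 (w : {ffun 'I_0 -> bool}) : extw w = (fun _ => false).
Proof. apply: funext => n; rewrite /extw; case: insubP => // [[i Hi]] //. Qed.

Definition fcons t (b : bool) (w : {ffun 'I_t -> bool}) : {ffun 'I_t.+1 -> bool} :=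
  [ffun i => if unlift ord0 i is Some j then w j else b].

Lemma extw_cons t b (w : {ffun 'I_t -> bool}) : extw (fcons b w) = bcons b (extw w).
Proof.
apply: funext => -[|n]; rewrite /extw /=.
  case: insubP => [i _ Ei|] //=.
  rewrite ffunE; have -> : i = ord0 by apply: val_inj.
  by rewrite unlift_none.
case: (ltnP n t) => H.
  have H' : (n.+1 < t.+1)%N by [].
  rewrite (insubT (fun m => (m < t.+1)%N) H') (insubT (fun m => (m < t)%N) H) /= ffunE.
  have -> : (Sub n.+1 H' : 'I_t.+1) = lift ord0 (Ordinal H) by apply: val_inj.
  by rewrite liftK.
have H' : ~~ (n.+1 < t.+1)%N by rewrite ltnS -leqNgt.
rewrite insubF; last exact/negbTE.
by rewrite insubF //; apply/negbTE; rewrite -leqNgt.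
Qed.

Definition weight (b : bool) : R := if b then 1 - p else p.

Lemma prefix_prob_pr t (A : (nat -> bool) -> bool) :
  prefix_prob p t A = pr t (fun w => (A w)%:R).
Proof.
elim: t A => [|t IH] A.
  rewrite /prefix_prob /= (big_pred1 [ffun i => false]); last first.
    by move=> w /=; apply/esym/eqP/ffunP => -[].
  by rewrite big_ord0 mul1r -/(extw _) extw0.
rewrite /prefix_prob.
have bij : bijective (fun bw : bool * {ffun 'I_t -> bool} => fcons bw.1 bw.2).
  exists (fun W : {ffun 'I_t.+1 -> bool} => (W ord0, [ffun j => W (lift ord0 j)])).
    move=> [b w] /=; congr pair; first by rewrite ffunE unlift_none.
    by apply/ffunP => j; rewrite !ffunE liftK.
  move=> W; apply/ffunP => i; rewrite !ffunE.
  case: unliftP => [j ->|->] //; by rewrite ffunE.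
rewrite (reindex _ (onW_bij _ bij)) /=.
rewrite -(pair_big predT predT (fun b w =>
   (\prod_(i < t.+1) weight (fcons b w i)) * (A (extw (fcons b w)))%:R)) /=.
rewrite big_bool /=.
have E b : \sum_(w : {ffun 'I_t -> bool})
    (\prod_(i < t.+1) weight (fcons b w i)) * (A (extw (fcons b w)))%:R
  = weight b * prefix_prob p t (fun w => A (bcons b w)).
  rewrite /prefix_prob big_distrr /=; apply: eq_bigr => w _.
  rewrite big_ord_recl !ffunE unlift_none extw_cons -mulrA; congr (_ * (_ * _)).
  by apply: eq_bigr => i _; rewrite ffunE liftK.
rewrite /weight in E; rewrite !E !IH /=; done.
Qed.

Variable S : Type.
Variable stp : S -> bool -> S.

Fixpoint run (s : S) (w : nat -> bool) (t : nat) : S :=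
  match t with 0 => s | t'.+1 => run (stp s (w 0%N)) (fun n => w n.+1) t' end.

Lemma runS t s w : run s w t.+1 = stp (run s w t) (w t).
Proof. by elim: t s w => [|t IH] s w //=; rewrite -IH. Qed.

Variables (done : S -> bool) (Phi : S -> R).
Hypotheses (p0 : 0 <= p) (p1 : p <= 1).
Hypothesis Phi0 : forall s, 0 <= Phi s.
Hypothesis done_fix : forall s b, done s -> stp s b = s.
Hypothesis Phi_step : forall s, ~~ done s ->
   1 + (1 - p) * Phi (stp s true) + p * Phi (stp s false) <= Phi s.

Lemma run_bound T s :
  \sum_(0 <= t < T) pr t (fun w => (~~ done (run s w t))%:R) <= Phi s.
Proof.
elim: T s => [|T IH] s; first by rewrite big_geq.
rewrite big_nat_recl //= big_split /= -!big_distrr /=.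
case: (boolP (done s)) => Hd /=.
  rewrite !done_fix // add0r.
  apply: (@le_trans _ _ ((1 - p) * Phi s + p * Phi s)); last by rewrite -mulrDl subrK mul1r.
  by apply: lerD; apply: ler_wpM2l; rewrite ?subr_ge0 //; apply: IH.
apply: le_trans (Phi_step Hd); rewrite -addrA; apply: lerD => //.
by apply: lerD; apply: ler_wpM2l; rewrite ?subr_ge0 //; apply: IH.
Qed.

End Pr.

Unset Implicit Arguments. Set Strict Implicit.
Local Open Scope classical_set_scope.
Local Open Scope ring_scope.

Lemma half_lt1 (R : realType) (p : R) : p < 1 / 2 -> p < 1.
Proof. move=> h; lra. Qed.

Theorem lemma5 (R : realType) (p : R) (hp0 : 0 <= p) (hp : p < 1 / 2) :
  exists C : R,
    forall (V E : finType) (src dst : E -> V) (F : forall T : finType, rel T -> Prop)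
           (rho : R) (Rz : {set E}) (plan : {set E} -> seq (seq E)),
      simple_moldgraph src dst ->
      graph_class F -> iso_closed F -> minor_closed F -> sparse_family rho F ->
      F V (madj src dst) ->
      connected_spanning src dst Rz ->
      valid_plan src dst plan ->
      (expected_queries p src dst Rz plan <= (C * rho * (#|E|)%:R)%:E)%E /\
      ((fun t : nat => prefix_prob p t (fun w =>
           let S := (exec src dst Rz plan w t).1 in
           [&& connected_spanning src dst S, spanning_tree src dst S & S \subset Rz]))
         @ \oo --> (1 : R)).
Proof.
have p1 : p < 1 := half_lt1 _ _ hp.
have p1' : p <= 1 by apply: ltW.
exists (16 / (1 - p)).
move=> V E src dst F rho Rz plan Hs Hgc Hi Hm Hsp HG HRz Hplan.
pose init := (finset.set0 : {set E}, 0%N).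
pose stp := step src dst Rz plan.
pose dn := fun st : {set E} * nat => connected_spanning src dst st.1.
pose Ph := Phi src dst Rz plan p rho.
have exec_run w t : exec src dst Rz plan w t = run stp init w t.
  by elim: t => [|t IH] //; rewrite [RHS]runS -IH.
have done_fix st b : dn st -> stp st b = st.
  by case: st => S j; rewrite /dn /stp /step /= => ->.
have Hbound T : \sum_(0 <= t < T) pr p t (fun w => (~~ dn (run stp init w t))%:R) <= Ph init.
  apply: (@run_bound R p _ stp dn Ph hp0 p1').
  - move=> st; exact: (Phi_ge0 HRz Hplan hp0 p1 Hs Hi Hm Hsp HG).
  - exact: done_fix.
  - move=> st Hd; have H := Phi_step HRz Hplan hp0 p1 Hs Hi Hm Hsp HG Hd; exact H.
have q0 : 1 - p != 0 by rewrite subr_eq0 eq_sym lt_eqF.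
have HPhi0 : Ph init <= 16 / (1 - p) * rho * (#|E|)%:R.
  have HL := Phi_le HRz Hplan hp0 p1 Hs Hi Hm Hsp HG init.
  have E2 : 2 * BB p rho = 16 / (1 - p) * rho by rewrite /BB; field.
  rewrite E2 in HL; apply: le_trans HL _.
  have Hc : (#|crossing src dst init.1| <= #|E|)%N by apply: max_card.
  case: (posnP #|E|) => HE.
    have H0 : #|crossing src dst init.1| = 0%N by apply/eqP; rewrite -leqn0 -HE.
    by rewrite HE H0 !mulr0.
  have [ed _] := card_gt0P HE.
  have HV : (0 < #|V|)%N by apply/card_gt0P; exists (src ed).
  have Hr := Hsp _ _ HG.
  have rho0 : 0 <= rho.
    have H1 : 0 <= rho * (#|V|)%:R by apply: le_trans Hr.
    by rewrite pmulr_lge0 ?ltr0n in H1.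
  have C0 : 0 <= 16 / (1 - p) * rho.
    apply: mulr_ge0 => //; apply: divr_ge0 => //; rewrite subr_ge0; exact: p1'.
  by apply: ler_wpM2l => //; rewrite ler_nat.
have Ha0 t : 0 <= pr p t (fun w => (~~ dn (run stp init w t))%:R).
  by apply: pr_ge0 => // w; exact: ler0n.
split.
  rewrite /expected_queries.
  have Ha t : prefix_prob p t (fun w => ~~ connected_spanning src dst (exec src dst Rz plan w t).1)
      = pr p t (fun w => (~~ dn (run stp init w t))%:R).
    by rewrite prefix_prob_pr; apply: pr_ext => w; rewrite exec_run.
  apply: lime_le.
    by apply: is_cvg_nneseries => n _ _; rewrite lee_fin Ha; exact: Ha0.
  apply: nearW => n; rewrite sumEFin lee_fin.
  under eq_bigr => t _ do rewrite Ha.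
  exact: le_trans (Hbound n) HPhi0.
have Hinv w t : forest src dst (exec src dst Rz plan w t).1 /\ (exec src dst Rz plan w t).1 \subset Rz.
  elim: t => [|t [IHf IHs]].
    by split; [apply/forallP => e; rewrite /= in_set0 | exact: sub0set].
  have H := step_inv HRz Hplan (w t) IHf IHs; exact H.
match goal with |- (?f @ \oo --> _) =>
  have -> : f = (fun t => 1 - pr p t (fun w => (~~ dn (run stp init w t))%:R)) end.
  apply: funext => t /=; rewrite prefix_prob_pr pr_compl; congr (1 - _).
  apply: pr_ext => w; rewrite /dn -exec_run.
  have [HF HR] := Hinv w t.
  case: (boolP (connected_spanning src dst (exec src dst Rz plan w t).1)) => Hd //=.
  by rewrite (forest_tree HF Hd) HR.
set a := fun t => pr p t (fun w => (~~ dn (run stp init w t))%:R).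
have Hser : cvgn (series a).
  apply: nondecreasing_is_cvgn.
    by apply: nondecreasing_series => n _ _; exact: Ha0.
  by exists (Ph init) => _ [n _ <-]; exact: Hbound n.
have H0 := cvg_series_cvg_0 Hser.
have := cvgB (cvg_cst (1 : R)) H0; rewrite subr0; exact.
Qed.
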